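(* Any quantum algorithm which estimates the distances of a metric space of $n$ points (given by oracle access to the distances) within a constant approximation factor has query complexity at least $\Omega(n^{3/2})$.
   Context: Estimating within approximation factor $\alpha$ means outputting an $n\times n$ matrix $A$ with $d(p_i,p_j)\le A[i][j]\le \alpha\,d(p_i,p_j)$ for all $i,j$, where the distances are available only via an oracle returning $d(p_i,p_j)$ on input $(i,j)$. *)

(* Defs.v *)
From HB Require Import structures.
From mathcomp Require Import all_boot all_order all_algebra.
From mathcomp Require Import complex.
From mathcomp Require Import boolp.
From mathcomp Require Import reals Rstruct.

Set Implicit Arguments.
Unset Strict Implicit.
Unset Printing Implicit Defensive.

Import Order.TTheory GRing.Theory Num.Theory.
Local Open Scope ring_scope.

Notation RR := Rdefinitions.R.
Notation CC := (complex RR).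

Definition is_metric (n M : nat) (d : 'I_n -> 'I_n -> 'I_M.+1) : Prop :=
  (forall i j, (nat_of_ord (d i j) == 0%N) = (i == j)) /\
  (forall i j, d i j = d j i) /\
  (forall i j k, (nat_of_ord (d i k) <= nat_of_ord (d i j) + nat_of_ord (d j k))%N).

Definition approximates (n M : nat) (alpha : RR)
    (d : 'I_n -> 'I_n -> 'I_M.+1) (A : 'M[RR]_n) : Prop :=
  forall i j : 'I_n,
    ((d i j : nat)%:R <= A i j) /\ (A i j <= alpha * (d i j : nat)%:R).

(* Quantum query algorithms (standard query model).
   Computational basis of the state space: query register (i,j),
   answer register b in Z_(M+1), workspace w in 'I_W.                    *)
Definition basis (n M W : nat) : finType :=
  ('I_n * 'I_n * 'I_M.+1 * 'I_W)%type.

(* Operators are given by their matrix entries  U s t = <s|U|t>. *)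
Definition operator (S : finType) := S -> S -> CC.
Definition state (S : finType) := S -> CC.

Definition apply_op (S : finType) (U : operator S) (psi : state S) : state S :=
  fun s => \sum_(t : S) U s t * psi t.

Definition unitary (S : finType) (U : operator S) : Prop :=
  forall s t : S, \sum_(u : S) (U u s)^* * U u t = (s == t)%:R.

(* The (standard, phase-free) oracle for distance d:
   |i,j,b,w>  |->  |i,j,b + d(i,j) mod (M+1), w>. *)
Definition oracle_map (n M W : nat) (d : 'I_n -> 'I_n -> 'I_M.+1)
    (s : basis n M W) : basis n M W :=
  let: (i, j, b, w) := s in (i, j, (b + d i j)%R, w).

Definition oracle (n M W : nat) (d : 'I_n -> 'I_n -> 'I_M.+1)
    : operator (basis n M W) :=
  fun s t => (s == oracle_map d t)%:R.

(* A T-query algorithm: initial basis state, unitaries U_0, ..., U_T,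
   and a decoding of the final computational-basis measurement outcome
   into an n x n real matrix (the output estimate). *)
Record query_algorithm (n M W T : nat) := QueryAlgorithm {
  qa_init : basis n M W;
  qa_U : nat -> operator (basis n M W);
  qa_unitary : forall k, (k <= T)%N -> unitary (qa_U k);
  qa_out : basis n M W -> 'M[RR]_n
}.

Fixpoint run_state (n M W : nat) (U : nat -> operator (basis n M W))
    (d : 'I_n -> 'I_n -> 'I_M.+1) (init : basis n M W) (k : nat)
    : state (basis n M W) :=
  match k with
  | 0 => apply_op (U 0%N) (fun s => (s == init)%:R)
  | k'.+1 => apply_op (U k) (apply_op (oracle d) (run_state U d init k'))
  end.

Definition final_state (n M W T : nat) (A : query_algorithm n M W T)
    (d : 'I_n -> 'I_n -> 'I_M.+1) : state (basis n M W) :=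
  run_state (qa_U A) d (qa_init A) T.

Definition sqmod (z : CC) : RR := (complex.Re z) ^+ 2 + (complex.Im z) ^+ 2.

Definition prob_output (n M W T : nat) (A : query_algorithm n M W T)
    (d : 'I_n -> 'I_n -> 'I_M.+1) (P : 'M[RR]_n -> bool) : RR :=
  \sum_(s : basis n M W | P (qa_out A s)) sqmod (final_state A d s).

Definition estimates_within (n M W T : nat) (alpha : RR)
    (A : query_algorithm n M W T) : Prop :=
  forall d : 'I_n -> 'I_n -> 'I_M.+1, is_metric d ->
    prob_output A d (fun X => `[< approximates alpha d X >]) >= 2%:R / 3%:R.

(* Main.v *)
Require Import Defs.
From mathcomp Require Import all_boot all_order all_algebra.
From mathcomp Require Import complex reals Rstruct.
From mathcomp Require Import boolp.
From mathcomp Require Import ring lra zify.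
Import Order.TTheory GRing.Theory Num.Theory.
Local Open Scope ring_scope.
Open Scope complex_scope.

Definition nm (z : CC) : RR := Num.sqrt (sqmod z).

Lemma sqmod_ge0 z : 0 <= sqmod z.
Proof. by rewrite /sqmod addr_ge0 ?sqr_ge0. Qed.

Lemma nm_ge0 z : 0 <= nm z.
Proof. exact: sqrtr_ge0. Qed.

Lemma nm_sq z : nm z ^+ 2 = sqmod z.
Proof. by rewrite /nm sqr_sqrtr // sqmod_ge0. Qed.

Lemma nm_normc z : nm z = Normc.normc z.
Proof. by case: z. Qed.

Lemma nmM z w : nm (z * w) = nm z * nm w.
Proof. by rewrite !nm_normc Normc.normcM. Qed.

Lemma nmD z w : nm (z + w) <= nm z + nm w.
Proof. rewrite !nm_normc. exact: le_normcD. Qed.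

Lemma nm0 : nm 0 = 0.
Proof. by rewrite nm_normc Normc.normc0. Qed.

Lemma nm1 : nm 1 = 1.
Proof. by rewrite nm_normc Normc.normc1. Qed.

Lemma nm_conj z : nm (z^*) = nm z.
Proof. by case: z => a b; rewrite /nm /sqmod /= sqrrN. Qed.

Lemma conjM_sq z : z^* * z = (sqmod z)%:C.
Proof. case: z => a b; rewrite /sqmod /=. apply/eqP; rewrite eq_complex /=; apply/andP; split; apply/eqP; ring. Qed.

Lemma amgmc (a b c : RR) : 0 < c -> a * b <= (c * a^+2 + c^-1 * b^+2)/2%:R.
Proof. move=> c0. have cn : c != 0 by rewrite gt_eqF.
have : 0 <= c^-1 * (c * a - b)^+2 by rewrite mulr_ge0 // ?sqr_ge0 // ltW ?invr_gt0.
have -> : c^-1 * (c * a - b)^+2 = c * a^+2 - 2%:R*(a*b) + c^-1 * b^+2 by field.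
lra. Qed.

Lemma nm_sum (I : finType) (P : pred I) (F : I -> CC) :
  nm (\sum_(i | P i) F i) <= \sum_(i | P i) nm (F i).
Proof.
apply: (big_ind2 (fun a b => nm a <= b)) => //; first by rewrite nm0.
move=> a1 b1 a2 b2 h1 h2; apply: le_trans (nmD _ _) _; exact: lerD.
Qed.

Lemma nmN z : nm (- z) = nm z.
Proof. by case: z => a b; rewrite /nm /sqmod /= !sqrrN. Qed.

Lemma nm_tri (a b : CC) : nm b <= nm a + nm (a - b).
Proof. have := nmD a (b - a); rewrite addrC subrK -opprB nmN //. Qed.

Section Q.
Variables (n M W : nat).
Local Notation S := (basis n M W).

Definition ip (psi phi : state S) : CC := \sum_(s : S) (psi s)^* * phi s.

Lemma ip_unitary (U : operator S) psi phi : unitary U ->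
  ip (apply_op U psi) (apply_op U phi) = ip psi phi.
Proof.
move=> HU; rewrite /ip /apply_op.
transitivity (\sum_(s : S) \sum_(t : S) \sum_(u : S)
   ((psi t)^* * phi u) * ((U s t)^* * U s u)).
  apply: eq_bigr => s _; rewrite rmorph_sum /= mulr_suml; apply: eq_bigr => t _.
  rewrite mulr_sumr; apply: eq_bigr => u _; rewrite rmorphM /=; ring.
rewrite exchange_big /=; apply: eq_bigr => t _.
rewrite exchange_big /=.
transitivity (\sum_(u : S) (psi t)^* * phi u * (t == u)%:R).
  apply: eq_bigr => u _; by rewrite -mulr_sumr HU.
rewrite (bigD1 t) //= eqxx mulr1 big1 ?addr0 // => u /negbTE.
by rewrite eq_sym => ->; rewrite mulr0.
Qed.

Definition omapV (d : 'I_n -> 'I_n -> 'I_M.+1) (s : S) : S :=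
  let: (i, j, b, w) := s in (i, j, (b - d i j)%R, w).

Lemma omapK d : cancel (oracle_map d) (omapV d).
Proof. by case=> [[[i j] b] w] /=; rewrite addrK. Qed.
Lemma omapVK d : cancel (omapV d) (oracle_map d).
Proof. by case=> [[[i j] b] w] /=; rewrite subrK. Qed.

Lemma oracle_apply d psi s : apply_op (oracle d) psi s = psi (omapV d s).
Proof.
rewrite /apply_op /oracle (bigD1 (omapV d s)) //= omapVK eqxx mul1r big1 ?addr0 //.
move=> t ht; case: eqP => [E|]; last by rewrite mul0r.
by move: ht; rewrite E omapK eqxx.
Qed.

Definition pos (s : S) : 'I_n * 'I_n := let: (i, j, b, w) := s in (i, j).

Definition hmap (x y : 'I_n -> 'I_n -> 'I_M.+1) (t : S) := omapV y (oracle_map x t).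

Lemma ip_oracle x y psi phi :
  ip (apply_op (oracle x) psi) (apply_op (oracle y) phi) =
  \sum_(t : S) (psi t)^* * phi (hmap x y t).
Proof.
rewrite /ip (reindex (oracle_map x)) /=; last first.
  by exists (omapV x) => s _; [rewrite omapK | rewrite omapVK].
by apply: eq_bigr => t _; rewrite !oracle_apply omapK.
Qed.

Definition diff (x y : 'I_n -> 'I_n -> 'I_M.+1) (t : S) :=
  x (pos t).1 (pos t).2 != y (pos t).1 (pos t).2.

Lemma hmap_same x y t : ~~ diff x y t -> hmap x y t = t.
Proof.
case: t => [[[i j] b] w]; rewrite /diff /= => /negPn/eqP E.
by rewrite /hmap /= E addrK.
Qed.

Lemma pos_hmap x y t : pos (hmap x y t) = pos t.
Proof. by case: t => [[[i j] b] w]. Qed.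

Lemma hmap_bij x y : bijective (hmap x y).
Proof.
by exists (hmap y x) => t; rewrite /hmap omapVK omapK.
Qed.

Lemma sum_hmap x y (F : S -> RR) :
  \sum_(t : S | diff x y t) F (hmap x y t) = \sum_(t : S | diff x y t) F t.
Proof.
rewrite [RHS](reindex (hmap x y)) /=; last first.
  by case: (hmap_bij x y) => g h1 h2; exists g => s _.
by apply: eq_bigl => t; rewrite /diff pos_hmap.
Qed.

Definition mass (x y : 'I_n -> 'I_n -> 'I_M.+1) (psi : state S) : RR :=
  \sum_(t : S | diff x y t) sqmod (psi t).

Lemma ip_step x y psi phi c : 0 < c ->
  nm (ip (apply_op (oracle x) psi) (apply_op (oracle y) phi) - ip psi phi)
  <= c * mass x y psi + c^-1 * mass x y phi.
Proof.
move=> c0; rewrite ip_oracle /ip -sumrB.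
rewrite (bigID (diff x y)) /= [X in _ + X]big1 ?addr0; last first.
  by move=> t /hmap_same ->; rewrite subrr.
apply: le_trans (nm_sum _ _ _) _.
apply: (@le_trans _ _ (\sum_(t | diff x y t)
   ((c * sqmod (psi t) + c^-1 * sqmod (phi (hmap x y t))) / 2%:R +
    (c * sqmod (psi t) + c^-1 * sqmod (phi t)) / 2%:R))).
  apply: ler_sum => t _; rewrite -mulrBr nmM nm_conj.
  apply: (@le_trans _ _ (nm (psi t) * (nm (phi (hmap x y t)) + nm (phi t)))).
    rewrite ler_wpM2l ?nm_ge0 //; apply: le_trans (nmD _ _) _.
    by rewrite nmN.
  rewrite mulrDr -!nm_sq; apply: lerD; exact: amgmc.
rewrite (eq_bigr (fun t => c * sqmod (psi t) + (c^-1 / 2%:R * sqmod (phi (hmap x y t)) +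
   c^-1 / 2%:R * sqmod (phi t)))); last by move=> t _; field; rewrite gt_eqF.
rewrite big_split big_split /= -!mulr_sumr (sum_hmap x y (fun t => sqmod (phi t))) /mass.
set m1 := \sum_(t | _) sqmod (phi t); set m2 := \sum_(t | _) sqmod (psi t).
lra.
Qed.


Lemma ip_self_oracle x psi : ip (apply_op (oracle x) psi) (apply_op (oracle x) psi) = ip psi psi.
Proof. by rewrite ip_oracle; apply: eq_bigr => t _; rewrite /hmap omapK. Qed.

Lemma ip_sq psi : ip psi psi = (\sum_(t : S) sqmod (psi t))%:C.
Proof. by rewrite rmorph_sum; apply: eq_bigr => t _; rewrite conjM_sq. Qed.

Lemma overlap (phi1 phi2 : state S) (G : pred S) :
  \sum_(t : S) sqmod (phi1 t) = 1 -> \sum_(t : S) sqmod (phi2 t) = 1 ->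
  2%:R / 3%:R <= \sum_(t | G t) sqmod (phi1 t) ->
  2%:R / 3%:R <= \sum_(t | ~~ G t) sqmod (phi2 t) ->
  nm (ip phi1 phi2) <= 19%:R / 20%:R.
Proof.
move=> N1 N2 H1 H2.
set u : RR := 7%:R / 10%:R.
have u0 : 0 < u by rewrite /u divr_gt0 // ltr0n.
have uv : u^-1 = 10%:R / 7%:R by rewrite /u invf_div.
apply: le_trans (nm_sum _ _ _) _.
rewrite (bigID G) /=.
apply: (@le_trans _ _ (\sum_(t | G t) (u * sqmod (phi1 t) + u^-1 * sqmod (phi2 t)) / 2%:R +
   \sum_(t | ~~ G t) (u * sqmod (phi2 t) + u^-1 * sqmod (phi1 t)) / 2%:R)).
  apply: lerD; apply: ler_sum => t _; rewrite nmM nm_conj -!nm_sq; last rewrite mulrC;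
  exact: amgmc.
rewrite -!mulr_suml !big_split /= -!mulr_sumr uv.
rewrite (bigID G) /= in N1; rewrite (bigID G) /= in N2; move: N1 N2.
have a1 : 0 <= \sum_(t | ~~ G t) sqmod (phi1 t) by apply: sumr_ge0 => t _; exact: sqmod_ge0.
have a2 : 0 <= \sum_(t | G t) sqmod (phi2 t) by apply: sumr_ge0 => t _; exact: sqmod_ge0.
move: H1 H2 a1 a2.
set p1 := \sum_(t | G t) sqmod (phi1 t); set p2 := \sum_(t | ~~ G t) sqmod (phi1 t).
set q1 := \sum_(t | G t) sqmod (phi2 t); set q2 := \sum_(t | ~~ G t) sqmod (phi2 t).
rewrite /u. lra.
Qed.

Section Run.
Variables (T : nat) (A : query_algorithm n M W T).

Definition run x k := run_state (qa_U A) x (qa_init A) k.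

Lemma run_norm x k : (k <= T)%N -> ip (run x k) (run x k) = 1.
Proof.
elim: k => [|k IH] hk.
  rewrite /run /= ip_unitary; last exact: qa_unitary.
  rewrite /ip (bigD1 (qa_init A)) //= eqxx.
  rewrite big1 ?addr0; first by rewrite mulr1; exact: conjc1.
  by move=> s /negbTE ->; rewrite mulr0.
rewrite /run /= ip_unitary; last exact: qa_unitary.
rewrite ip_self_oracle IH //; exact: ltnW.
Qed.

Lemma run_sq x k : (k <= T)%N -> \sum_(t : S) sqmod (run x k t) = 1.
Proof. by move=> hk; apply: complexI; rewrite -ip_sq run_norm. Qed.

Lemma mass_bound (J : finType) (Q : pred J) (D : J -> S -> bool) psi (p : bool) :
  \sum_(t : S) sqmod (psi t) = 1 ->
  (forall t, \sum_(j : J) (Q j && D j t)%:R <= p%:R :> RR) ->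
  \sum_(j : J) (Q j)%:R * (\sum_(t | D j t) sqmod (psi t)) <= p%:R :> RR.
Proof.
move=> H1 H2.
apply: (@le_trans _ _ (\sum_(t : S) sqmod (psi t) * \sum_(j : J) (Q j && D j t)%:R)).
  rewrite le_eqVlt; apply/orP; left; apply/eqP; rewrite (eq_bigr (fun j => \sum_(t : S) (Q j && D j t)%:R * sqmod (psi t))).
    rewrite exchange_big /=; apply: eq_bigr => t _; rewrite mulr_sumr.
    by apply: eq_bigr => j _; rewrite mulrC.
  move=> j _; rewrite big_mkcond mulr_sumr /=; apply: eq_bigr => t _.
  by case: (Q j); case: (D j t); rewrite /= ?mul1r ?mul0r.
apply: (@le_trans _ _ (\sum_(t : S) sqmod (psi t) * p%:R)).
  by apply: ler_sum => t _; rewrite ler_wpM2l ?sqmod_ge0.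
by rewrite -mulr_suml H1 mul1r.
Qed.


Section Adv.
Variables (I : finType) (dm : I -> 'I_n -> 'I_n -> 'I_M.+1) (R : rel I) (PX PY : pred I).

Definition Fk k : RR := \sum_(x : I) \sum_(y : I) (R x y)%:R * nm (ip (run (dm x) k) (run (dm y) k)).

Lemma adversary (c : RR) : 0 < c ->
 (forall x y, R x y -> PX x) -> (forall x y, R x y -> PY y) ->
 (forall x t, \sum_(y : I) (R x y && diff (dm x) (dm y) t)%:R <= 1 :> RR) ->
 (forall y t, \sum_(x : I) (R x y && diff (dm x) (dm y) t)%:R <= 1 :> RR) ->
 (forall x y, R x y -> nm (ip (run (dm x) T) (run (dm y) T)) <= 19%:R / 20%:R) ->
 (\sum_(x : I) \sum_(y : I) (R x y)%:R) / 20%:R <=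
   T%:R * (c * \sum_(x : I) (PX x)%:R + c^-1 * \sum_(y : I) (PY y)%:R) :> RR.
Proof.
move=> c0 HRX HRY HcX HcY Hfin.
set NR := \sum_(x : I) \sum_(y : I) _.
set D := c * _ + _.
have F0 : Fk 0 = NR.
  apply: eq_bigr => x _; apply: eq_bigr => y _.
  have -> : run (dm y) 0 = run (dm x) 0 by [].
  by rewrite run_norm // nm1 mulr1.
have FT : Fk T <= 19%:R / 20%:R * NR.
  rewrite /NR !mulr_sumr; apply: ler_sum => x _; rewrite mulr_sumr; apply: ler_sum => y _.
  case E: (R x y); last by rewrite !mul0r mulr0.
  by rewrite mul1r mulr1; exact: Hfin.
have step : forall k, (k < T)%N -> Fk k <= Fk k.+1 + D.
  move=> k hk.
  have B1 : \sum_(x : I) \sum_(y : I) (R x y)%:R * mass (dm x) (dm y) (run (dm x) k)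
            <= \sum_(x : I) (PX x)%:R.
    apply: ler_sum => x _; apply: mass_bound; first by apply: run_sq; exact: ltnW.
    move=> t; case PXx: (PX x); first exact: HcX.
    rewrite big1 // => y _; case Rxy: (R x y) => //.
    by move: (HRX _ _ Rxy); rewrite PXx.
  have B2 : \sum_(x : I) \sum_(y : I) (R x y)%:R * mass (dm x) (dm y) (run (dm y) k)
            <= \sum_(y : I) (PY y)%:R.
    rewrite exchange_big /=.
    apply: ler_sum => y _; apply: mass_bound; first by apply: run_sq; exact: ltnW.
    move=> t; case PYy: (PY y); first exact: HcY.
    rewrite big1 // => x _; case Rxy: (R x y) => //.
    by move: (HRY _ _ Rxy); rewrite PYy.
  apply: (@le_trans _ _ (\sum_(x : I) \sum_(y : I) (R x y)%:R *
     (nm (ip (run (dm x) k.+1) (run (dm y) k.+1)) +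
      (c * mass (dm x) (dm y) (run (dm x) k) + c^-1 * mass (dm x) (dm y) (run (dm y) k))))).
    apply: ler_sum => x _; apply: ler_sum => y _.
    case: (R x y); last by rewrite !mul0r.
    rewrite !mul1r; apply: le_trans (nm_tri (ip (run (dm x) k.+1) (run (dm y) k.+1)) _) _.
    apply: lerD => //.
    rewrite /run /= ip_unitary; last exact: qa_unitary.
    exact: ip_step.
  rewrite /Fk /D.
  under eq_bigr => x _ do under eq_bigr => y _ do rewrite mulrDr mulrDr mulrCA [X in _ + (_ + X)]mulrCA.
  under eq_bigr => x _ do rewrite big_split /= big_split /= -!mulr_sumr.
  rewrite big_split /= big_split /= -!mulr_sumr.
  by rewrite lerD2l; apply: lerD; apply: ler_wpM2l => //; rewrite ltW // ?invr_gt0.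
have D0 : 0 <= D.
  have s1 : 0 <= \sum_(x : I) (PX x)%:R :> RR by apply: sumr_ge0 => i _; exact: ler0n.
  have s2 : 0 <= \sum_(x : I) (PY x)%:R :> RR by apply: sumr_ge0 => i _; exact: ler0n.
  by rewrite /D addr_ge0 // mulr_ge0 // ltW // invr_gt0.
have iter : forall k, (k <= T)%N -> NR <= Fk k + k%:R * D.
  elim=> [|j IH] hj; first by rewrite F0 mul0r addr0.
  apply: le_trans (IH (ltnW hj)) _.
  apply: le_trans (lerD (step j hj) (lexx (j%:R * D))) _.
  by rewrite -addrA lerD2l -{1}(mul1r D) -mulrDl -natr1 addrC.
have := iter T (leqnn T).
move: FT; set f := Fk T; set tD := T%:R * D. lra.
Qed.
End Adv.

End Run.
End Q.

Close Scope complex_scope.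

Set Implicit Arguments.
Unset Strict Implicit.
Section Inst.
Variables (n M h : nat).
Local Notation E := ('I_h * 'I_h)%type.

Definition matching (S : {set E}) : bool :=
  [forall e in S, forall e' in S, ((e.1 == e'.1) || (e.2 == e'.2)) ==> (e == e')].

Lemma matchingP (S : {set E}) e e' : matching S -> e \in S -> e' \in S ->
  (e.1 = e'.1 \/ e.2 = e'.2) -> e = e'.
Proof.
move=> /forall_inP /(_ e) H he he' H'; move: (H he) => /forall_inP /(_ e' he') /implyP.
by case: H' => ->; rewrite eqxx ?orbT => /(_ isT) /eqP.
Qed.

Definition hits (e : E) (i j : 'I_n) : bool :=
  (((i : nat) == e.1) && ((j : nat) == h + e.2)%N) ||
  (((j : nat) == e.1) && ((i : nat) == h + e.2)%N).

Lemma hits_sym e i j : hits e i j = hits e j i.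
Proof. by rewrite /hits orbC. Qed.

Lemma hits_uniq e e' i j : hits e i j -> hits e' i j -> e = e'.
Proof.
have l1 := ltn_ord e.1; have l2 := ltn_ord e'.1.
case: e l1 => [a b]; case: e' l2 => [a' b'] /= l1 l2.
rewrite /hits /= => /orP[] /andP[/eqP h1 /eqP h2] /orP[] /andP[/eqP h3 /eqP h4];
 try lia; congr (_, _); apply: ord_inj; lia.
Qed.

Lemma hits_neq e i j : hits e i j -> i != j.
Proof.
have l1 := ltn_ord e.1.
rewrite /hits => /orP[] /andP[/eqP h1 /eqP h2]; apply/eqP => E; subst; lia.
Qed.

Definition small (S : {set E}) i j := [exists e in S, hits e i j].

Lemma small_sym S i j : small S i j = small S j i.
Proof. by apply: eq_existsb => e; rewrite hits_sym. Qed.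

Lemma small_sub (S S' : {set E}) i j : S \subset S' -> small S i j -> small S' i j.
Proof.
move=> /subsetP sub /exists_inP [e he hh]; apply/exists_inP; exists e => //; exact: sub.
Qed.

Lemma hits_share (S : {set E}) e e' i j k : matching S -> e \in S -> e' \in S ->
  hits e i j -> hits e' j k -> i = k.
Proof.
move=> mS he he'.
have l1 := ltn_ord e.1; have l2 := ltn_ord e'.1.
have mP := matchingP mS he he'.
move: mP l1 l2; case: e {he} => [a b]; case: e' {he'} => [a' b'] /= mP l1 l2.
rewrite /hits /= => /orP[] /andP[/eqP h1 /eqP h2] /orP[] /andP[/eqP h3 /eqP h4]; try lia.
- have [ea eb] : (a, b) = (a', b') by apply: mP; right; apply: ord_inj; lia.
  subst; apply: ord_inj; lia.
- have [ea eb] : (a, b) = (a', b') by apply: mP; left; apply: ord_inj; lia.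
  subst; apply: ord_inj; lia.
Qed.

Definition dmS (S : {set E}) (i j : 'I_n) : 'I_M.+1 :=
  if i == j then ord0 else if small S i j then inord 1 else ord_max.

Lemma dmS_val (S : {set E}) i j : (0 < M)%N ->
  (dmS S i j : nat) = if i == j then 0%N else if small S i j then 1%N else M.
Proof. by move=> M0; rewrite /dmS; case: (i == j) => //; case: (small S i j) => //; rewrite inordK. Qed.

Lemma dmS_metric (S : {set E}) : (0 < M)%N -> matching S -> is_metric (dmS S).
Proof.
move=> M0 mS; split; [|split].
- move=> i j; rewrite dmS_val //; case: (i == j) => //; case: (small S i j) => //.
  by rewrite eqn0Ngt M0.
- move=> i j; rewrite /dmS eq_sym small_sym; case: (j == i) => //.
- move=> i j k; rewrite !dmS_val //.
  case: (eqVneq i k) => [->|ik]; first by [].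
  case: (eqVneq i j) => [<-|ij]; first by rewrite ?eqxx ?(negbTE ik) ?addn0 ?add0n.
  case: (eqVneq j k) => [<-|jk]; first by rewrite ?eqxx ?(negbTE ik) ?addn0 ?add0n.
  case Hij: (small S i j); case Hjk: (small S j k);
    case: (small S i k); try lia.
  move: Hij Hjk => /exists_inP [e he h1] /exists_inP [e' he' h2].
  by move: ik; rewrite (hits_share mS he he' h1 h2) eqxx.
Qed.


Lemma matching_sub (S S' : {set E}) : S \subset S' -> matching S' -> matching S.
Proof.
move=> /subsetP sub mS'; apply/forall_inP => e he; apply/forall_inP => e' he'.
apply/implyP => /orP H; apply/eqP; apply: (matchingP mS'); try exact: sub.
by case: H => /eqP; [left|right].
Qed.

Variable s : nat.
Definition PX (S : {set E}) := matching S && (#|S| == s).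
Definition PY (S : {set E}) := matching S && (#|S| == s.+1).
Definition Rel (S S' : {set E}) := [&& PX S, PY S' & S \subset S'].

Lemma diff_info x y i j : (0 < M)%N -> Rel x y -> dmS x i j != dmS y i j ->
  exists e, [/\ e \in y, e \notin x & hits e i j].
Proof.
move=> M0 /and3P [_ _ sub]; rewrite /dmS; case: (i == j); first by rewrite eqxx.
case sx: (small x i j); first by rewrite (small_sub sub sx) eqxx.
case sy: (small y i j); last by rewrite eqxx.
move=> _; move: sy => /exists_inP [e he hh]; exists e; split => //.
apply/negP => hx; have : small x i j by apply/exists_inP; exists e.
by rewrite sx.
Qed.

Lemma up_eq x y e : Rel x y -> e \in y -> e \notin x -> y = e |: x.
Proof.
move=> /and3P [/andP [_ /eqP cx] /andP [_ /eqP cy] sub] ey ex.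
apply/eqP; rewrite eq_sym eqEcard; apply/andP; split.
  apply/subsetP => z; rewrite in_setU1 => /orP [/eqP -> //|]; exact: (subsetP sub).
by rewrite cardsU1 ex cx cy.
Qed.

Lemma down_eq x y e : Rel x y -> e \in y -> e \notin x -> x = y :\ e.
Proof.
move=> /and3P [/andP [_ /eqP cx] /andP [_ /eqP cy] sub] ey ex.
apply/eqP; rewrite eqEcard; apply/andP; split.
  apply/subsetP => z hz; rewrite in_setD1 (subsetP sub) // andbT.
  by apply/eqP => ze; move: ex; rewrite -ze hz.
by move: (cardsD1 e y); rewrite ey cy cx add1n => -[->].
Qed.

Lemma sum_le1 (J : finType) (P : pred J) :
  (forall a b, P a -> P b -> a = b) -> \sum_(y : J) (P y)%:R <= 1 :> RR.
Proof.
move=> U; case: (pickP P) => [y0 Py0|none].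
  rewrite (bigD1 y0) //= Py0 big1 ?addr0 // => y ne.
  case Py: (P y) => //; by move: ne; rewrite (U _ _ Py Py0) eqxx.
by rewrite big1 // => y _; rewrite none.
Qed.

Lemma HcX_inst x i j : (0 < M)%N ->
  \sum_(y : {set E}) (Rel x y && (dmS x i j != dmS y i j))%:R <= 1 :> RR.
Proof.
move=> M0; apply: sum_le1 => y1 y2 /andP [R1 D1] /andP [R2 D2].
have [e1 [e1y e1x h1]] := diff_info M0 R1 D1.
have [e2 [e2y e2x h2]] := diff_info M0 R2 D2.
by rewrite (up_eq R1 e1y e1x) (up_eq R2 e2y e2x) (hits_uniq h1 h2).
Qed.

Lemma HcY_inst y i j : (0 < M)%N ->
  \sum_(x : {set E}) (Rel x y && (dmS x i j != dmS y i j))%:R <= 1 :> RR.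
Proof.
move=> M0; apply: sum_le1 => x1 x2 /andP [R1 D1] /andP [R2 D2].
have [e1 [e1y e1x h1]] := diff_info M0 R1 D1.
have [e2 [e2y e2x h2]] := diff_info M0 R2 D2.
by rewrite (down_eq R1 e1y e1x) (down_eq R2 e2y e2x) (hits_uniq h1 h2).
Qed.

Lemma degY y : PY y -> (s.+1 <= #|[set x | Rel x y]|)%N.
Proof.
move=> /andP [my /eqP cy]; rewrite -cy.
have inj : {in y &, injective (fun e => y :\ e)}.
  move=> e1 e2 h1 h2 E; apply/eqP/negPn/negP => ne.
  have : e1 \in y :\ e2 by rewrite in_setD1 ne h1.
  by rewrite -E in_setD1 eqxx.
rewrite -(card_in_imset inj); apply: subset_leq_card; apply/subsetP => x.
move=> /imsetP [e he ->]; rewrite inE /Rel /PX /PY my cy eqxx subD1set andbT /=.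
rewrite (matching_sub (subD1set y e) my) /=.
by rewrite andbT; move: (cardsD1 e y); rewrite he cy add1n => -[<-].
Qed.

Lemma degX x : PX x -> ((h - s) * (h - s) <= #|[set y | Rel x y]|)%N.
Proof.
move=> /andP [mx /eqP cx].
set F1 := ~: [set e.1 | e in x]; set F2 := ~: [set e.2 | e in x].
have c1 : #|F1| = (h - s)%N.
  rewrite cardsCs setCK card_ord card_in_imset ?cx // => e1 e2 h1 h2 E.
  by apply: (matchingP mx) => //; left.
have c2 : #|F2| = (h - s)%N.
  rewrite cardsCs setCK card_ord card_in_imset ?cx // => e1 e2 h1 h2 E.
  by apply: (matchingP mx) => //; right.
have nx : forall e, e \in setX F1 F2 -> e \notin x.
  move=> e; rewrite inE => /andP [f1 _]; apply/negP => ex.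
  by move: f1; rewrite inE (imset_f (fun e : E => e.1) ex).
have inj : {in setX F1 F2 &, injective (fun e => e |: x)}.
  move=> e1 e2 h1 h2 E.
  have : e1 \in e2 |: x by rewrite -E setU11.
  by rewrite in_setU1 (negbTE (nx _ h1)) orbF => /eqP.
rewrite -{1}c1 -c2 -cardsX -(card_in_imset inj); apply: subset_leq_card; apply/subsetP => y.
move=> /imsetP [e he ->]; rewrite inE /Rel /PX /PY mx cx eqxx subsetUr /= andbT.
rewrite cardsU1 (nx _ he) cx eqxx andbT.
move: he; rewrite inE !inE => /andP [f1 f2].
apply/forall_inP => z hz; apply/forall_inP => z' hz'; apply/implyP => H.
move: hz hz'; rewrite !in_setU1 => /orP [/eqP ez|zx] /orP [/eqP ez'|zx'].
- by rewrite ez ez'.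
- subst z; case/orP: H => /eqP H.
    by move: f1; rewrite H (imset_f (fun e : E => e.1) zx').
  by move: f2; rewrite H (imset_f (fun e : E => e.2) zx').
- subst z'; case/orP: H => /eqP H.
    by move: f1; rewrite -H (imset_f (fun e : E => e.1) zx).
  by move: f2; rewrite -H (imset_f (fun e : E => e.2) zx).
- apply/eqP; apply: (matchingP mx) => //; by case/orP: H => /eqP; [left|right].
Qed.

Lemma PX_exists : (s <= h)%N -> exists x, PX x.
Proof.
move=> sh; exists [set (widen_ord sh i, widen_ord sh i) | i : 'I_s].
apply/andP; split.
  apply/forall_inP => e /imsetP [i _ ->]; apply/forall_inP => e' /imsetP [i' _ ->].
  apply/implyP => /= /orP [] /eqP -> //.
rewrite card_imset ?card_ord // => i i' [] E _; exact: ord_inj E.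
Qed.

End Inst.

Arguments diff {n M W}. Arguments pos {n M W}. Arguments ip {n M W}.
Arguments run {n M W T}. Arguments run_sq {n M W T}.

Lemma final_arith (q NR NX NY m m' Tr : RR) : 0 < q -> 0 <= NX -> 0 <= NY -> 0 < NR ->
  0 <= Tr -> q ^+ 4 <= 64%:R * m -> q ^+ 2 <= 8%:R * m' -> m * NX <= NR -> m' * NY <= NR ->
  NR / 20%:R <= Tr * (q * NX + q^-1 * NY) -> q ^+ 3 / 1440%:R <= Tr.
Proof.
move=> q0 x0 y0 r0 t0 hm hm' hx hy H.
have qn : q != 0 by rewrite gt_eqF.
have a1 : q ^+ 3 * (q * NX) <= 64%:R * NR.
  have -> : q ^+ 3 * (q * NX) = q ^+ 4 * NX by ring.
  apply: le_trans (ler_wpM2r x0 hm) _; rewrite -mulrA; apply: ler_wpM2l => //; lra.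
have a2 : q ^+ 3 * (q^-1 * NY) <= 8%:R * NR.
  have -> : q ^+ 3 * (q^-1 * NY) = q ^+ 2 * NY by field.
  apply: le_trans (ler_wpM2r y0 hm') _; rewrite -mulrA; apply: ler_wpM2l => //; lra.
have q3 : 0 <= q ^+ 3 by rewrite exprn_ge0 // ltW.
have H' := ler_wpM2l q3 H.
have H2 : q ^+ 3 * (NR / 20%:R) <= Tr * (72%:R * NR).
  apply: le_trans H' _; rewrite mulrCA; apply: ler_wpM2l => //; rewrite mulrDr; lra.
have : (q ^+ 3 / 1440%:R) * NR <= Tr * NR by move: H2; set Q := q ^+ 3; lra.
by rewrite ler_pM2r.
Qed.

Lemma sum_card (J : finType) (P : pred J) :
  \sum_(y : J) (P y)%:R = #|[set y | P y]|%:R :> RR.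
Proof.
rewrite -natr_sum; congr (_%:R); rewrite -sum1_card [RHS]big_mkcond /=.
by apply: eq_bigr => y _; rewrite inE; case: (P y).
Qed.

Lemma sum_sub_pred (J : finType) (P Q : pred J) (f : J -> RR) :
  (forall t, P t -> Q t) -> (forall t, 0 <= f t) ->
  \sum_(t | P t) f t <= \sum_(t | Q t) f t.
Proof.
move=> PQ f0; rewrite [X in X <= _]big_mkcond [X in _ <= X]big_mkcond /=.
apply: ler_sum => t _; case Pt: (P t); first by rewrite (PQ _ Pt).
by case: (Q t).
Qed.

Lemma tail_lemma (n h s T : nat) (NR NX NY : RR) :
  (1 < n)%N -> (n = odd n + (h + h))%N -> (h = odd h + (s + s))%N ->
  NR / 20%:R <= T%:R * (Num.sqrt (n%:R : RR) * NX + (Num.sqrt (n%:R : RR))^-1 * NY) ->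
  ((h - s) * (h - s))%:R * NX <= NR -> s.+1%:R * NY <= NR -> 0 <= NX -> 0 <= NY -> 0 < NR ->
  1 / 1440%:R * Num.sqrt (n%:R ^+ 3 : RR) <= T%:R.
Proof.
move=> hn hn2 hs2 key hNX hNY NX0 NY0 NR0.
have on1 : (odd n <= 1)%N by case: (odd n).
have oh1 : (odd h <= 1)%N by case: (odd h).
set c := Num.sqrt (n%:R : RR) in key *.
have c0 : 0 < c by rewrite sqrtr_gt0 ltr0n; lia.
have cn : c ^+ 2 = n%:R by rewrite sqr_sqrtr // ler0n.
have hm : c ^+ 4 <= 64%:R * ((h - s) * (h - s))%:R.
  rewrite (_ : 4%N = (2 * 2)%N) // exprM cn -natrX -natrM ler_nat.
  have k8 : (n <= 8 * (h - s))%N by lia.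
  by apply: leq_trans (leq_mul k8 k8) _; rewrite mulnACA.
have hm' : c ^+ 2 <= 8%:R * s.+1%:R.
  rewrite cn -natrM ler_nat; lia.
have := @final_arith c NR NX NY _ _ T%:R c0 NX0 NY0 NR0 (ler0n _ T) hm hm' hNX hNY key.
have -> : Num.sqrt (n%:R ^+ 3) = c ^+ 3.
  rewrite -cn -exprM (_ : (2 * 3)%N = (3 * 2)%N) // exprM sqrtr_sqr ger0_norm //.
  by rewrite exprn_ge0 // ltW.
by rewrite mulrC mul1r.
Qed.

Theorem mainTheorem11 :
  forall alpha : RR, 1 <= alpha ->
  exists c : RR, 0 < c /\
  exists N0 : nat, forall n : nat, (N0 <= n)%N ->
  exists M : nat, forall (W T : nat) (A : query_algorithm n M W T),
    estimates_within alpha A ->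
    c * Num.sqrt ((n : nat)%:R ^+ 3) <= (T : nat)%:R.
Proof.
move=> alpha ha.
exists (1 / 1440%:R); split; first by rewrite divr_gt0 // ltr0n.
exists 2%N => n hn.
set h := n./2; set s := h./2.
have hn2 : (n = odd n + (h + h))%N by rewrite addnn /h odd_double_half.
have hs2 : (h = odd h + (s + s))%N by rewrite addnn /s odd_double_half.
have on1 : (odd n <= 1)%N by case: (odd n).
have oh1 : (odd h <= 1)%N by case: (odd h).
set M := (Num.Def.archi_bound alpha).+2.
exists M => W T A Hest.
have M0 : (0 < M)%N by [].
have aM : alpha < M%:R.
  apply: lt_le_trans (archi_boundP (le_trans ler01 ha)) _.
  by rewrite ler_nat /M -addn2 leq_addr.
pose dm := fun S : {set 'I_h * 'I_h} => @dmS n M h S.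
have sh : (s <= h)%N by lia.
set c := Num.sqrt (n%:R : RR).
have c0 : 0 < c by rewrite sqrtr_gt0 ltr0n; lia.
have HRX : forall x y, @Rel h s x y -> @PX h s x by move=> x y /and3P [].
have HRY : forall x y, @Rel h s x y -> @PY h s y by move=> x y /and3P [].
have HcX : forall x (t : basis n M W),
    \sum_(y : {set 'I_h * 'I_h}) (@Rel h s x y && diff (dm x) (dm y) t)%:R <= 1 :> RR.
  move=> x t; exact: (HcX_inst s x (pos t).1 (pos t).2 M0).
have HcY : forall y (t : basis n M W),
    \sum_(x : {set 'I_h * 'I_h}) (@Rel h s x y && diff (dm x) (dm y) t)%:R <= 1 :> RR.
  move=> y t; exact: (HcY_inst s y (pos t).1 (pos t).2 M0).
have Hfin : forall x y, @Rel h s x y ->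
    nm (ip (run A (dm x) T) (run A (dm y) T)) <= 19%:R / 20%:R.
  move=> x y Rxy.
  case/and3P: (Rxy) => /andP [mx /eqP cx] /andP [my /eqP cy] sub.
  have metx : is_metric (dm x) by exact: dmS_metric.
  have mety : is_metric (dm y) by exact: dmS_metric.
  apply: (@overlap n M W _ _ (fun t => `[< approximates alpha (dm x) (qa_out A t) >])).
  - exact: run_sq.
  - exact: run_sq.
  - exact: (Hest (dm x) metx).
  apply: le_trans (Hest (dm y) mety) _.
  apply: sum_sub_pred; last by move=> t; exact: sqmod_ge0.
  move=> t /asboolP Ay; apply/negP => /asboolP Ax.
  have [e ey ex] : exists2 e, e \in y & e \notin x.
    apply/subsetPn; apply/negP => sub'; have := subset_leq_card sub'; rewrite cx cy; lia.
  have l1 : (e.1 < n)%N by have := ltn_ord e.1; lia.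
  have l2 : (h + e.2 < n)%N by have := ltn_ord e.2; lia.
  pose i : 'I_n := Ordinal l1. pose j : 'I_n := Ordinal l2.
  have hij : hits e i j by rewrite /hits /= !eqxx.
  have ij : (i == j) = false by apply/negbTE; exact: hits_neq hij.
  have sy : small y i j by apply/exists_inP; exists e.
  have sx : small x i j = false.
    apply/negbTE/negP => /exists_inP [e' he' h'].
    by move: ex; rewrite -(hits_uniq h' hij) he'.
  have [Ax1 _] := Ax i j. have [_ Ay1] := Ay i j.
  move: Ax1 Ay1; rewrite /dm !dmS_val // ij sx sy => Ax1 Ay1.
  have := le_trans Ax1 Ay1; rewrite mulr1; lra.
have key := @adversary n M W T A {set 'I_h * 'I_h} dm (@Rel h s) (@PX h s) (@PY h s) c c0
  HRX HRY HcX HcY Hfin.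
set NR := \sum_(x : {set 'I_h * 'I_h}) _ in key.
set NX := \sum_(x : {set 'I_h * 'I_h}) _ in key.
set NY := \sum_(y : {set 'I_h * 'I_h}) (@PY h s y)%:R in key.
set m := ((h - s) * (h - s))%N.
have hNX : m%:R * NX <= NR.
  rewrite /NX /NR mulr_sumr; apply: ler_sum => x _; rewrite sum_card.
  case PXx: (@PX h s x); last by rewrite mulr0.
  by rewrite mulr1 ler_nat; exact: degX.
have hNY : s.+1%:R * NY <= NR.
  rewrite /NY /NR exchange_big /= mulr_sumr; apply: ler_sum => y _; rewrite sum_card.
  case PYy: (@PY h s y); last by rewrite mulr0.
  by rewrite mulr1 ler_nat; exact: degY.
have NX0 : 0 <= NX by apply: sumr_ge0 => x _; exact: ler0n.
have NY0 : 0 <= NY by apply: sumr_ge0 => x _; exact: ler0n.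
have NX1 : 1 <= NX.
  have [x0 Px0] := PX_exists sh.
  rewrite /NX (bigD1 x0) //= Px0 lerDl; apply: sumr_ge0 => x _; exact: ler0n.
have hs1 : (0 < h - s)%N by lia.
have m1 : (0 < m)%N by rewrite /m muln_gt0 hs1.
have NR0 : 0 < NR.
  apply: lt_le_trans hNX; apply: mulr_gt0; last by lra.
  by rewrite ltr0n.
exact: (tail_lemma hn hn2 hs2 key hNX hNY NX0 NY0 NR0).
Qed.
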